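(* Let $v$ be the vertex of $\mathcal H^\dagger$ with coordinates $(m,n)\in\mathbb Z^2$, and let $T'$ be the image of $\mathcal H^\dagger$ under the map $\psi'$ constructed exactly as $\psi_{\lambda\Delta}$ (same flow $\phi^\dagger$), except that the additive constant is fixed by $\psi'(v)=0$ instead of $\psi=0$ at the dual vertex just to the left of $\mathcal H_1$. Then $T'=T_{\lambda'\Delta}$ with $$\lambda'=\lambda\Big(\tfrac{\beta}{\gamma}\Big)^{m}\Big(\tfrac{\beta}{\alpha}\Big)^{n}.$$ In particular, if $\lambda$ is chosen uniformly at random on the unit circle, the law of the random T-graph $T_{\lambda\Delta}$ is invariant under the lattice translations of $\mathcal H$ (i.e. under re-centring the construction at any dual vertex).
   Context: Setup. Let $\mathcal H$ be the hexagonal lattice embedded in the plane with one third of its edges vertical, with its vertices properly 2-coloured black/white. Let $e_1,e_2$ be two vectors generating its translation group and $\mathcal H_1$ a fundamental domain consisting of one vertical edge with its white top endpoint and black bottom endpoint. Each vertex $v$ has coordinates $(m(v),n(v))\in\mathbb Z^2$, the unique pair with $v-m e_1-n e_2\in\mathcal H_1$; thus $w(m,n)$ (white) and $b(m,n)$ (black) are the two endpoints of a vertical edge. $\mathcal H^\dagger$ denotes the dual triangular lattice; a face of $\mathcal H^\dagger$ is black or white according to the vertex of $\mathcal H$ it contains; a vertex $v$ of $\mathcal H^\dagger$ (a hexagonal face of $\mathcal H$) has coordinates $(m(v),n(v))$ equal to the common coordinates of the two vertices of that hexagon located just to the right of $v$. Fix $p_a,p_b,p_c\in(0,1)$ with $p_a+p_b+p_c=1$,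 a triangle $\Delta$ in $\mathbb C$ with vertices $A,B,C$ and angles $\pi p_a,\pi p_b,\pi p_c$, and set $\alpha=C-B$, $\beta=A-C$, $\gamma=B-A$ (so $\alpha+\beta+\gamma=0$). For $\lambda\in\mathbb C$ with $|\lambda|=1$ define, for adjacent white $w$ and black $b$, $$\phi(wb)=\Re\Big(\lambda^{-1}(\tfrac{\beta}{\gamma})^{-m(w)}(\tfrac{\beta}{\alpha})^{-n(w)}\Big)\,\alpha\,\lambda\,(\tfrac{\beta}{\gamma})^{m(b)}(\tfrac{\beta}{\alpha})^{n(b)},\qquad \phi(bw)=-\phi(wb).$$ The dual flow $\phi^\dagger$ assigns to the oriented edge of $\mathcal H^\dagger$ crossing $wb$ with $w$ on its left the value $\phi(wb)$; it has zero circulation around every triangle, so there is a function $\psi=\psi_{\lambda\Delta}$ on vertices of $\mathcal H^\dagger$ with $\psi(v')-\psi(v)=\phi^\dagger(vv')$, normalised by $\psi=0$ at the dual vertex just to the left of $\mathcal H_1$. Extending $\psi$ affinely on edges, $T_{\lambda\Delta}=\psi(\mathcal H^\dagger)\subset\mathbb C$ is called the T-graph with parameters $\Delta,\lambda$. *)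

(* Defs.v *)
(* The complex plane is modelled by an arbitrary
   numClosedFieldType C (e.g. algC, or the complex numbers). *)
From HB Require Import structures.
From mathcomp Require Import all_boot all_order all_algebra.
Set Implicit Arguments. Unset Strict Implicit. Unset Printing Implicit Defensive.
Import Order.TTheory GRing.Theory Num.Theory.
Local Open Scope ring_scope.

(* Conventions:
   - w(m,n), b(m,n) are the white/black endpoints of the vertical edge of
     cell (m,n).  b(m,n) is adjacent to w(m,n), w(m+1,n), w(m,n+1)
     (forced by zero circulation of phi^dagger).
   - The dual vertex (hexagonal face) with coordinates (m,n) is the face
     whose right side is the vertical edge (m,n); it is encoded as the pair
     (m,n) : int * int.  The dual vertex just left of H_1 is (0,0).
   - The three edges at b(m,n), with dual edges oriented with w on the left:
       w(m,n)b(m,n)     : face (m,n)     -> face (m+1,n-1)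
       w(m+1,n)b(m,n)   : face (m+1,n-1) -> face (m+1,n)
       w(m,n+1)b(m,n)   : face (m+1,n)   -> face (m,n)                    *)

Section Tgraph.
Variable C : numClosedFieldType.

Definition phi (al be ga lam : C) (mw nw mb nb : int) : C :=
  'Re (lam^-1 * (be / ga) ^ (- mw) * (be / al) ^ (- nw))
    * al * lam * (be / ga) ^ mb * (be / al) ^ nb.

Definition is_dual_potential (al be ga lam : C) (psi : int * int -> C) : Prop :=
  forall m n : int,
    [/\ psi (m + 1, n - 1) - psi (m, n) = phi al be ga lam m n m n,
        psi (m + 1, n) - psi (m + 1, n - 1) = phi al be ga lam (m + 1) n m n
      & psi (m, n) - psi (m + 1, n) = phi al be ga lam m (n + 1) m n].

Definition segment (x y z : C) : Prop :=
  exists t : C, [/\ t \is Num.real, 0 <= t, t <= 1 & z = x + t * (y - x)].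

Definition Timage (psi : int * int -> C) (z : C) : Prop :=
  exists m n : int,
    [\/ segment (psi (m, n)) (psi (m + 1, n - 1)) z,
        segment (psi (m + 1, n - 1)) (psi (m + 1, n)) z
      | segment (psi (m + 1, n)) (psi (m, n)) z].

(* The T-graph T_{lam Delta} (with psi = 0 at the dual vertex (0,0)) is
   Timage psi for psi satisfying is_dual_potential al be ga lam psi and
   psi (0,0) = 0.  A recentred version uses psi (m,n) = 0 instead. *)

End Tgraph.

(* Main.v *)
Require Import Defs.
From HB Require Import structures.
From mathcomp Require Import all_boot all_order all_algebra.
From mathcomp Require Import ring.
Import Order.TTheory GRing.Theory Num.Theory.
Local Open Scope ring_scope.

Section S.
Variable C : numClosedFieldType.

Lemma conjXz (x : C) (n : int) : x != 0 -> (x ^ n)^* = x^* ^ n.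
Proof. by move=> x0; rewrite rmorphXz // unitfE. Qed.

Lemma exist_pot (al be lam : C) :
  al != 0 -> be != 0 -> al + be != 0 -> lam != 0 ->
  be * al^* - al * be^* != 0 ->
  exists psi, is_dual_potential al be (- (al + be)) lam psi /\ psi (0, 0) = 0.
Proof.
move=> ha hb hab hl hnd.
set ga := - (al + be).
have hg : ga != 0 by rewrite oppr_eq0.
pose r := be / ga; pose s := be / al.
have hr : r != 0 by rewrite mulf_neq0 // invr_eq0.
have hs : s != 0 by rewrite mulf_neq0 // invr_eq0.
have hrc : r^* != 0 by rewrite conjC_eq0.
have hsc : s^* != 0 by rewrite conjC_eq0.
pose a := - (al ^+ 2) / (2 * be).
pose b := al * ga / (2 * be).
pose c := lam / lam^* * al * al^* * ga / (2 * (ga^* * al - al^* * ga)).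
pose psi (p : int * int) := a * p.1%:~R + b * p.2%:~R
   + c * ((r ^ p.1 * s ^ p.2) / (r^* ^ p.1 * s^* ^ p.2) - 1).
exists psi; split; last first.
  by rewrite /psi /= !expr0z !mulr0 !add0r mulr1 divr1 subrr mulr0.
move=> k l; rewrite /psi /phi /= !(intrD, intrN) /= -/r -/s.
rewrite -!invr_expz !ReE !rmorphM /= !fmorphV /= !conjXz //.
have e1 : forall x : C, x ^ (1 : int) = x := fun x => expr1z x.
have eN1 : forall x : C, x ^ (-1 : int) = x^-1 := fun x => exprN1 x.
have hac : al^* != 0 by rewrite conjC_eq0.
have hbc : be^* != 0 by rewrite conjC_eq0.
have hgc : ga^* != 0 by rewrite conjC_eq0.
rewrite !expfzDr ?mulf_neq0 ?invr_eq0 // !e1 !eN1.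
rewrite /r /s /c /a /b /ga !rmorphM /= !fmorphV /= !rmorphN /= !rmorphD /=.
set X := (be / _) ^ k; set Y := (be / al) ^ l.
set Xc := (be^* / _) ^ k; set Yc := (be^* / al^*) ^ l.
have hX : X != 0 by rewrite expfz_neq0 // mulf_neq0 ?invr_eq0.
have hY : Y != 0 by rewrite expfz_neq0 // mulf_neq0 ?invr_eq0.
have hXc : Xc != 0 by rewrite expfz_neq0 // mulf_neq0 ?invr_eq0 // -rmorphD -rmorphN conjC_eq0.
have hYc : Yc != 0 by rewrite expfz_neq0 // mulf_neq0 ?invr_eq0.
have hlc : lam^* != 0 by rewrite conjC_eq0.
have h2 : (2:C) != 0 by rewrite pnatr_eq0.
rewrite ?rmorph1.
have habc : al^* + be^* != 0 by rewrite -rmorphD conjC_eq0.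
have hnd' : - (al^* + be^*) * al - al^* * - (al + be) != 0.
  by rewrite (_ : _ - _ = be * al^* - al * be^*) //; ring.
split; by field; rewrite ?hYc ?hXc ?hlc ?hY ?hX ?hl ?hnd' ?hb ?hac ?hbc ?habc ?ha ?hab.
Qed.
Lemma const_int (f : int -> C) : (forall k, f (k + 1) = f k) -> forall k, f k = f 0.
Proof.
move=> hf; elim/int_ind => [//|k IH|k IH].
  have -> : (k.+1 : int) = k%:Z + 1 by rewrite -addn1 PoszD.
  by rewrite hf.
rewrite -IH -[in RHS](subrK 1 (- k%:Z)) hf.
by congr f; rewrite -addn1 PoszD opprD.
Qed.

Lemma const2 (D : int * int -> C) :
  (forall k l, D (k + 1, l) = D (k, l)) -> (forall k l, D (k, l + 1) = D (k, l)) ->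
  forall k l, D (k, l) = D (0, 0).
Proof.
move=> h1 h2 k l.
rewrite (const_int (fun k => D (k, l)) (fun k => h1 k l) k).
exact: (const_int (fun l => D (0, l)) (fun l => h2 0 l) l).
Qed.

Lemma shift_phi (al be ga lam : C) (m n k l k' l' : int) :
  al != 0 -> be != 0 -> ga != 0 ->
  phi al be ga lam (k + m) (l + n) (k' + m) (l' + n) =
  phi al be ga (lam * (be / ga) ^ m * (be / al) ^ n) k l k' l'.
Proof.
move=> ha hb hg.
have hr : be / ga != 0 by rewrite mulf_neq0 // invr_eq0.
have hs : be / al != 0 by rewrite mulf_neq0 // invr_eq0.
rewrite /phi !opprD !expfzDr // -!invr_expz.
have h1 := expfz_neq0 m hr; have h2 := expfz_neq0 n hs.
have -> : (lam * (be / ga) ^ m * (be / al) ^ n)^-1 * ((be / ga) ^ k)^-1 * ((be / al) ^ l)^-1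
   = lam^-1 * (((be / ga) ^ k)^-1 * ((be / ga) ^ m)^-1) * (((be / al) ^ l)^-1 * ((be / al) ^ n)^-1).
  by rewrite !invfM; ring.
by ring.
Qed.

Lemma scale_phi (al be ga lam t : C) (mw nw mb nb : int) :
  t \is Num.real -> t != 0 ->
  phi al be ga (t * lam) mw nw mb nb = phi al be ga lam mw nw mb nb.
Proof.
move=> tr t0; rewrite /phi !ReE !invfM !rmorphM /= !fmorphV /= (conj_Creal tr).
have [->|l0] := eqVneq lam 0; first by rewrite !(mulr0, mul0r, invr0, conjC0).
have lc0 : lam^* != 0 by rewrite conjC_eq0.
have h2 : (2:C) != 0 by rewrite pnatr_eq0.
by field; rewrite lc0 l0 t0.
Qed.


Lemma shift_pot (al be ga lam : C) (psi : int * int -> C) (m n : int) :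
  al != 0 -> be != 0 -> ga != 0 -> is_dual_potential al be ga lam psi ->
  is_dual_potential al be ga (lam * (be / ga) ^ m * (be / al) ^ n)
    (fun p => psi (p.1 + m, p.2 + n)).
Proof.
move=> ha hb hg H k l /=; have [h1 h2 h3] := H (k + m) (l + n).
rewrite -!shift_phi // (addrAC k 1 m) (addrAC l 1 n) (addrAC l (-1) n).
by split.
Qed.

Lemma pot_unique (al be ga lam : C) (p1 p2 : int * int -> C) :
  is_dual_potential al be ga lam p1 -> is_dual_potential al be ga lam p2 ->
  p1 (0, 0) = p2 (0, 0) -> forall p, p1 p = p2 p.
Proof.
move=> H1 H2 e [k l]; apply/eqP; rewrite -subr_eq0; apply/eqP.
pose D p := p1 p - p2 p.
have hD1 : forall k l, D (k + 1, l - 1) = D (k, l).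
  move=> a b; have [x1 _ _] := H1 a b; have [y1 _ _] := H2 a b.
  rewrite /D; move/eqP: x1; rewrite subr_eq => /eqP ->.
  move/eqP: y1; rewrite subr_eq => /eqP ->.
  ring.
have hD2 : forall k l, D (k + 1, l) = D (k + 1, l - 1).
  move=> a b; have [_ x1 _] := H1 a b; have [_ y1 _] := H2 a b.
  rewrite /D; move/eqP: x1; rewrite subr_eq => /eqP ->.
  move/eqP: y1; rewrite subr_eq => /eqP ->.
  ring.
have hD3 : forall k l, D (k, l) = D (k + 1, l).
  move=> a b; have [_ _ x1] := H1 a b; have [_ _ y1] := H2 a b.
  rewrite /D; move/eqP: x1; rewrite subr_eq => /eqP ->.
  move/eqP: y1; rewrite subr_eq => /eqP ->.
  ring.
have := @const2 D (fun a b => esym (hD3 a b)) _ k l.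
rewrite /D e subrr; apply.
move=> a b; have := hD2 (a - 1) (b + 1).
by rewrite subrK addrK.
Qed.

Lemma Timage_ext (f g : int * int -> C) z :
  (forall p, f p = g p) -> Timage f z <-> Timage g z.
Proof.
move=> E; split; case=> k [l H]; exists k, l; by rewrite !E in H * || by rewrite -!E in H *.
Qed.

Lemma Timage_shift (f : int * int -> C) (m n : int) z :
  Timage (fun p => f (p.1 + m, p.2 + n)) z <-> Timage f z.
Proof.
split; case=> k [l H].
  by exists (k + m), (l + n); rewrite /= (addrAC k 1 m) (addrAC l (-1) n) in H.
exists (k - m), (l - n); rewrite /= (addrAC (k - m) 1 m) (addrAC (l - n) (-1) n) !subrK.
exact H.
Qed.

Lemma recentre (al be ga lam : C) (psi' psi : int * int -> C) (m n : int) z :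
  al != 0 -> be != 0 -> ga != 0 ->
  is_dual_potential al be ga lam psi' -> psi' (m, n) = 0 ->
  is_dual_potential al be ga (lam * (be / ga) ^ m * (be / al) ^ n) psi -> psi (0, 0) = 0 ->
  Timage psi' z <-> Timage psi z.
Proof.
move=> ha hb hg H' e' H e.
have := pot_unique _ _ _ _ _ _ (shift_pot al be ga lam psi' m n ha hb hg H') H.
rewrite /= !add0r e' e => /(_ erefl) E.
rewrite -(Timage_ext _ _ z E); exact: iff_sym (Timage_shift psi' m n z).
Qed.

Lemma pot_scale (al be ga lam t : C) (psi : int * int -> C) :
  t \is Num.real -> t != 0 ->
  is_dual_potential al be ga (t * lam) psi -> is_dual_potential al be ga lam psi.
Proof.
move=> tr t0 H k l; have := H k l.
by rewrite !(scale_phi al be ga lam t _ _ _ _ tr t0).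
Qed.

End S.

Theorem mainTheorem1 (C : numClosedFieldType) (A B C0 : C)
    (hDelta : 'Im ((B - A) * (C0 - A)^*) != 0)
    (lam : C) (hlam : `|lam| = 1) (m n : int) :
  let al := C0 - B in let be := A - C0 in let ga := B - A in
  let lam' := lam * (be / ga) ^ m * (be / al) ^ n in
  (* T_{lam' Delta} is well defined *)
  (exists psi, is_dual_potential al be ga lam' psi /\ psi (0, 0) = 0) /\
  (* T' = T_{lam' Delta} *)
  (forall psi' psi : int * int -> C,
     is_dual_potential al be ga lam psi' -> psi' (m, n) = 0 ->
     is_dual_potential al be ga lam' psi -> psi (0, 0) = 0 ->
     forall z, Timage psi' z <-> Timage psi z) /\
  (* in particular: recentring at (m,n) acts on unimodular lambda as a
     fixed rotation u of the unit circle (so the uniform law is preserved) *)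
  (exists u : C, `|u| = 1 /\
     forall mu : C, `|mu| = 1 ->
     forall psi' psi : int * int -> C,
       is_dual_potential al be ga mu psi' -> psi' (m, n) = 0 ->
       is_dual_potential al be ga (u * mu) psi -> psi (0, 0) = 0 ->
       forall z, Timage psi' z <-> Timage psi z).
Proof.
move=> al be ga lam'.
have hga : ga = - (al + be) by rewrite /ga /al /be; ring.
have E : be * al^* - al * be^* = ((B - A) * (C0 - A)^*)^* - (B - A) * (C0 - A)^*.
  by rewrite /be /al !rmorphM /= conjCK !rmorphB /=; ring.
have hnd : be * al^* - al * be^* != 0.
  apply: contra hDelta; rewrite ImE -E => /eqP ->; by rewrite mulr0 mul0r.
have ha : al != 0.
  by apply: contraNneq hnd => ->; rewrite conjC0 !(mulr0, mul0r) subrr.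
have hb : be != 0.
  by apply: contraNneq hnd => ->; rewrite conjC0 !(mulr0, mul0r) subrr.
have hab : al + be != 0.
  apply: contraNneq hnd => /eqP; rewrite addr_eq0 => /eqP ->.
  by rewrite rmorphN /= mulrN mulNr opprK addNr.
have hg : ga != 0 by rewrite hga oppr_eq0.
have hl : lam != 0 by rewrite -normr_eq0 hlam oner_eq0.
have hr : be / ga != 0 by rewrite mulf_neq0 // invr_eq0.
have hs : be / al != 0 by rewrite mulf_neq0 // invr_eq0.
have hl' : lam' != 0 by rewrite !mulf_neq0 // expfz_neq0.
split.
  have [psi [Hp Hp0]] := exist_pot C al be lam' ha hb hab hl' hnd.
  by exists psi; rewrite hga.
split.
  move=> psi' psi H' e' H e z.
  exact: (recentre C al be ga lam psi' psi m n z ha hb hg H' e' H e).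
pose w := (be / ga) ^ m * (be / al) ^ n.
have hw : w != 0 by rewrite mulf_neq0 // expfz_neq0.
have hnw : `|w| != 0 by rewrite normr_eq0.
exists (w / `|w|); split.
  by rewrite normf_div normr_id divff.
move=> mu hmu psi' psi H' e' H e z.
apply: (recentre C al be ga mu psi' psi m n z ha hb hg H' e' _ e).
apply: (pot_scale C al be ga _ (`|w|^-1)); first by rewrite rpredV normr_real.
  by rewrite invr_eq0.
by rewrite (_ : _ * _ = w / `|w| * mu) // /w; ring.
Qed.
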